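(* Let $m>0$ and let $f:\mathbb R^d\to\mathbb R$ be continuously differentiable and $m$-strongly convex with minimizer $x^\star$ (no Lipschitz assumption on $\nabla f$ is required). Let $\bar b>0$ and let $x(t)$, $t\ge0$, solve $\ddot x+\bar b\sqrt m\,\dot x+\nabla f(x)=0$. Set $$\bar\Xi(\bar r,\bar b)=\bar r\bar b^2-2(\bar r^2+1)\bar b+\bar r^3+3\bar r.$$ Then there is a unique real $\bar r$ with $\bar\Xi(\bar r,\bar b)=0$; it satisfies $0<\bar r\le1$, with $\bar r=1$ if and only if $\bar b=2$. Let $\lambda=\sqrt m\,\bar r$ and $v=\dot x/\sqrt m$. Then the function $$t\mapsto e^{\lambda t}\Big(f(x(t))-f(x^\star)+\tfrac m2\big\|v(t)+\bar r(x(t)-x^\star)\big\|^2\Big)$$ is nonincreasing on $[0,\infty)$; consequently $f(x(t))-f(x^\star)\le\bar Ce^{-\lambda t}$ with $$\bar C=f(x(0))-f(x^\star)+\frac m2\Big\|\frac1{\sqrt m}\dot x(0)+\bar r(x(0)-x^\star)\Big\|^2.$$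
   Context: $f$ is $m$-strongly convex if $f(y)\ge f(x)+\nabla f(x)^T(y-x)+\frac m2\|y-x\|^2$ for all $x,y$. The quadratic term equals $(\xi-\xi^\star)^T(\widehat{\bar P}\otimes I_d)(\xi-\xi^\star)$ with $\xi=(v,x)$, $\xi^\star=(0,x^\star)$, $\widehat{\bar P}=\frac m2\begin{pmatrix}1&\bar r\\ \bar r&\bar r^2\end{pmatrix}$. *)

(* Defs.v *)
From HB Require Import structures.
From mathcomp Require Import all_boot all_order all_algebra.
From mathcomp Require Import all_classical all_reals all_analysis.
Set Implicit Arguments. Unset Strict Implicit. Unset Printing Implicit Defensive.
Import Order.TTheory GRing.Theory Num.Theory.
Import numFieldNormedType.Exports.
Local Open Scope classical_set_scope.
Local Open Scope ring_scope.

Definition dotv {R : realType} {d : nat} (u v : 'rV[R]_d) : R :=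
  \sum_(i < d) u ord0 i * v ord0 i.
Definition sqnorm {R : realType} {d : nat} (u : 'rV[R]_d) : R := dotv u u.

Definition C1_with_gradient {R : realType} {d : nat}
    (f : 'rV[R]_d -> R) (gradf : 'rV[R]_d -> 'rV[R]_d) : Prop :=
  (forall x, differentiable f x) /\
  (forall x h, 'd f x h = dotv (gradf x) h) /\
  continuous gradf.

Definition strongly_convex {R : realType} {d : nat} (m : R)
    (f : 'rV[R]_d -> R) (gradf : 'rV[R]_d -> 'rV[R]_d) : Prop :=
  forall x y, f x + dotv (gradf x) (y - x) + m / 2 * sqnorm (y - x) <= f y.

Definition Xibar {R : realType} (r b : R) : R :=
  r * b ^+ 2 - 2 * (r ^+ 2 + 1) * b + r ^+ 3 + 3 * r.

Definition solves_ode {R : realType} {d : nat} (m b : R)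
    (gradf : 'rV[R]_d -> 'rV[R]_d) (x xd : R -> 'rV[R]_d) : Prop :=
  {within `[0, +oo[, continuous x} /\ {within `[0, +oo[, continuous xd} /\
  forall t : R, 0 < t ->
    derivable x t 1 /\ 'D_1 x t = xd t /\ derivable xd t 1 /\
    'D_1 xd t + (b * Num.sqrt m) *: xd t + gradf (x t) = 0.

(* Main.v *)
Require Import Defs.
From HB Require Import structures.
From mathcomp Require Import all_boot all_order all_algebra.
From mathcomp Require Import all_classical all_reals all_analysis.
From mathcomp Require Import ring lra.
Import Order.TTheory GRing.Theory Num.Theory.
Import numFieldNormedType.Exports.
Local Open Scope classical_set_scope.
Local Open Scope ring_scope.

Lemma Xi_bounds {R : realType} (r b : R) : 0 < b -> Xibar r b = 0 -> 0 < r /\ r <= 1.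
Proof.
move=> b0; rewrite /Xibar => H.
have H1 : r * (b - r) ^+ 2 + 3 * r - 2 * b = 0 by rewrite -H; ring.
have rp : 0 < r.
  rewrite ltNge; apply/negP => r0.
  have : r * (b - r) ^+ 2 <= 0 by rewrite mulr_le0_ge0 // sqr_ge0.
  lra.
split => //.
have H2 : (r * b - (r ^+ 2 + 1)) ^+ 2 + (r ^+ 2 - 1) = 0 by rewrite -(mulr0 r) -H; ring.
have : r ^+ 2 <= 1 by have := sqr_ge0 (r * b - (r ^+ 2 + 1)); lra.
nra.
Qed.

Lemma Xi_unique {R : realType} (r1 r2 b : R) : 0 < b -> Xibar r1 b = 0 -> Xibar r2 b = 0 -> r1 = r2.
Proof.
move=> b0 H1 H2; have [p1 q1] := Xi_bounds _ _ b0 H1; have [p2 q2] := Xi_bounds _ _ b0 H2.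
have E : (r1 - r2) * ((b - (r1 + r2)) ^+ 2 - r1 * r2 + 3) = 0.
  by move: H1 H2; rewrite /Xibar => H1 H2; rewrite -(subr0 0) -{1}H1 -H2; ring.
have pos : 0 < (b - (r1 + r2)) ^+ 2 - r1 * r2 + 3.
  have := sqr_ge0 (b - (r1 + r2)); nra.
move/eqP: E; rewrite mulf_eq0 (gt_eqF pos) orbF subr_eq0 => /eqP //.
Qed.

Lemma Xi_exists {R : realType} (b : R) : 0 < b -> exists r, Xibar r b = 0.
Proof.
move=> b0.
pose p : {poly R} := 'X^3 - (2 * b)%:P * 'X^2 + (b ^+ 2 + 3)%:P * 'X - (2 * b)%:P.
have pE : forall r, p.[r] = Xibar r b.
  by move=> r; rewrite /p !(hornerD, hornerN, hornerCM, hornerXn, hornerX, hornerC) /Xibar; ring.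
have := @IVT R (horner p) 0 1 0 ler01 (continuous_subspaceT (@continuous_horner R p)).
rewrite !pE /Xibar.
have h0 : 0 * b ^+ 2 - 2 * (0 ^+ 2 + 1) * b + 0 ^+ 3 + 3 * 0 <= 0 :> R.
  rewrite expr0n /= !mul0r; lra.
have h1 : 0 <= 1 * b ^+ 2 - 2 * (1 ^+ 2 + 1) * b + 1 ^+ 3 + 3 * 1 :> R.
  have := sqr_ge0 (b - 2); rewrite !expr1n; nra.
case; first by apply/andP; split; [rewrite ge_min h0 | rewrite le_max h1 orbT].
by move=> c _; rewrite pE; exists c.
Qed.

Lemma coord_is_derive {R : realType} {d : nat} (F : R -> 'rV[R]_d) (t : R) (i : 'I_d) :
  derivable F t 1 -> is_derive t 1 (fun s => F s ord0 i) ('D_1 F t ord0 i).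
Proof.
move=> /derivable1_diffP dF.
have @f : {linear 'rV[R]_d -> R}.
  by exists (fun N : 'rV[R]_d => N ord0 i); do 2![eexists]; do ?[constructor];
     rewrite ?mxE// => ? *; rewrite ?mxE//; move=> ?; rewrite !mxE.
have fc : continuous f by exact: coord_continuous.
have -> : (fun s => F s ord0 i) = f \o F by [].
have dfF : differentiable (f \o F) t.
  by apply: differentiable_comp => //; exact: linear_differentiable.
apply: DeriveDef; first by apply/derivable1_diffP.
rewrite deriveE // diff_comp //; last exact: linear_differentiable.
by rewrite diff_lin //= -deriveE.
Qed.

Lemma f_is_derive {R : realType} {d : nat} (f : 'rV[R]_d -> R) gradf (F : R -> 'rV[R]_d) (t : R) :
  C1_with_gradient f gradf ->
  derivable F t 1 -> is_derive t 1 (fun s => f (F s)) (dotv (gradf (F t)) ('D_1 F t)).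
Proof.
move=> [df [dfE _]] /derivable1_diffP dF.
have -> : (fun s => f (F s)) = f \o F by [].
have dfF : differentiable (f \o F) t by apply: differentiable_comp.
apply: DeriveDef; first by apply/derivable1_diffP.
by rewrite deriveE // diff_comp //= dfE -deriveE.
Qed.

Lemma q_le {R : realType} (r b v e : R) : 0 < r -> 0 < b -> Xibar r b = 0 ->
  - r / 2 * e ^+ 2 + r / 2 * (v + r * e) ^+ 2 + (r - b) * (v + r * e) * v <= 0.
Proof.
move=> r0 b0 H.
have H1 : r * (b - r) ^+ 2 = 2 * b - 3 * r by move: H; rewrite /Xibar => H; apply/eqP; rewrite -subr_eq0 -H; apply/eqP; ring.
have a0 : 3 * r / 2 - b < 0.
  have [br|br] := eqVneq b r.
    by move: H1; rewrite br subrr expr0n /= mulr0 => H2; lra.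
  have : 0 < (b - r) ^+ 2 by rewrite lt_def sqrf_eq0 subr_eq0 br sqr_ge0.
  move: H1; set z := (b - r) ^+ 2 => H1 z0.
  have : 0 < r * z by rewrite mulr_gt0.
  lra.
set a := 3 * r / 2 - b.
set be := r * (2 * r - b).
have id : 4 * a * (- r / 2 * e ^+ 2 + r / 2 * (v + r * e) ^+ 2 + (r - b) * (v + r * e) * v)
   = (2 * a * v + be * e) ^+ 2 - r * Xibar r b * e ^+ 2 by rewrite /a /be /Xibar; field.
rewrite H mulr0 mul0r subr0 in id.
have := sqr_ge0 (2 * a * v + be * e); rewrite -id.
set q := (X in 4 * a * X) => h.
rewrite -mulrA in h.
have aq : 0 <= a * q by lra.
rewrite leNgt; apply/negP => qp.
have : a * q < 0 by rewrite pmulr_llt0.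
lra.
Qed.

Lemma term_le {R : realType} (s r b g e Y : R) : 0 < s -> 0 < r -> 0 < b -> Xibar r b = 0 ->
  s * r * (g * e - s ^+ 2 / 2 * e ^+ 2 + s ^+ 2 / 2 * (s^-1 * Y + r * e) ^+ 2)
  + g * Y + s ^+ 2 * (s^-1 * Y + r * e) * (s^-1 * (- (b * s * Y) - g) + r * Y) <= 0.
Proof.
move=> s0 r0 b0 H.
have -> : s * r * (g * e - s ^+ 2 / 2 * e ^+ 2 + s ^+ 2 / 2 * (s^-1 * Y + r * e) ^+ 2)
  + g * Y + s ^+ 2 * (s^-1 * Y + r * e) * (s^-1 * (- (b * s * Y) - g) + r * Y) =
  s ^+ 3 * (- r / 2 * e ^+ 2 + r / 2 * (s^-1 * Y + r * e) ^+ 2 + (r - b) * (s^-1 * Y + r * e) * (s^-1 * Y)).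
  by field; rewrite gt_eqF.
rewrite mulr_ge0_le0 //; first by rewrite exprn_ge0 // ltW.
exact: q_le.
Qed.

Lemma is_derive_ext {R : realType} (f g : R -> R) (t df : R) :
  (forall s, f s = g s) -> is_derive t 1 g df -> is_derive t 1 f df.
Proof. by move=> fg; rewrite (_ : f = g) //; apply: funext. Qed.

Lemma is_derive_bigsum {R : realType} {I : Type} (s : seq I) (F : I -> R -> R) (dF : I -> R) (t : R) :
  (forall i, is_derive t 1 (F i) (dF i)) ->
  is_derive t 1 (fun u => \sum_(i <- s) F i u) (\sum_(i <- s) dF i).
Proof.
move=> h; elim: s => [|a s IH].
  apply: (@is_derive_ext _ _ (cst 0)); first by move=> u; rewrite big_nil.
  by rewrite big_nil; apply: is_derive_cst.
apply: (@is_derive_ext _ _ (F a + (fun u => \sum_(i <- s) F i u))).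
  by move=> u; rewrite big_cons.
by rewrite big_cons; apply: is_deriveD.
Qed.

Lemma key_alg {R : realType} (S r b X Z Y G : R) : S != 0 ->
  S * r * (G * (X - Z)) -
  S * r * (S ^+ 2 / 2 * (X - Z) ^+ 2) +
  S * r *
  (S ^+ 2 / 2 * (S^-1 * Y + r * (X - Z)) ^+ 2) +
  (G * Y +
   S ^+ 2 / 2 *
   ((S^-1 * Y + r * (X - Z)) *
    (S^-1 * (- (b * S * Y) - G) + r * Y) +
    (S^-1 * Y + r * (X - Z)) *
    (S^-1 * (- (b * S * Y) - G) + r * Y))) =
  S * r *
  (G * (X - Z) -
   S ^+ 2 / 2 * (X - Z) ^+ 2 +
   S ^+ 2 / 2 * (S^-1 * Y + r * (X - Z)) ^+ 2) +
  G * Y +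
  S ^+ 2 * (S^-1 * Y + r * (X - Z)) *
  (S^-1 * (- (b * S * Y) - G) + r * Y).
Proof. by move=> S0; field. Qed.

Lemma cont_bigsum {R : realType} {T : topologicalType} {I : Type} (s : seq I) (F : I -> T -> R) (t : T) :
  (forall i, {for t, continuous (F i)}) ->
  {for t, continuous (fun u => \sum_(i <- s) F i u)}.
Proof.
move=> h; elim: s => [|a s IH].
  rewrite (_ : (fun u => _) = cst 0); first exact: cvg_cst.
  by apply: funext => u; rewrite big_nil.
rewrite (_ : (fun u => _) = F a + (fun u => \sum_(i <- s) F i u)).
  exact: continuousD.
by apply: funext => u; rewrite big_cons.
Qed.

Section Main.
Variables (R : realType) (d : nat) (m b r : R) (f : 'rV[R]_d -> R)
  (gradf : 'rV[R]_d -> 'rV[R]_d) (xs : 'rV[R]_d) (x xd : R -> 'rV[R]_d).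
Hypotheses (m0 : 0 < m) (fC1 : C1_with_gradient f gradf)
  (fsc : strongly_convex m f gradf) (b0 : 0 < b) (Hr : Xibar r b = 0).

Let s0 := Num.sqrt m.
Let c := s0^-1.
Let lam := s0 * r.
Definition Wf (i : 'I_d) (s : R) := c * xd s ord0 i + r * (x s ord0 i - xs ord0 i).
Definition Vf (s : R) := f (x s) - f xs + m / 2 * \sum_(i < d) Wf i s ^+ 2.
Definition Ef (s : R) := expR (lam * s) * Vf s.

Lemma Ef_derive (t : R) : derivable x t 1 -> 'D_1 x t = xd t -> derivable xd t 1 ->
  'D_1 xd t + (b * Num.sqrt m) *: xd t + gradf (x t) = 0 ->
  derivable Ef t 1 /\ 'D_1 Ef t <= 0.
Proof.
move=> dx Dx dxd ode.
have hX i : is_derive t 1 (fun s => x s ord0 i) (xd t ord0 i).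
  by rewrite -Dx; exact: coord_is_derive.
have hY i : is_derive t 1 (fun s => xd s ord0 i) ('D_1 xd t ord0 i) by exact: coord_is_derive.
have hW i : is_derive t 1 (Wf i) (c * 'D_1 xd t ord0 i + r * xd t ord0 i).
  apply: (@is_derive_ext _ _ (c \*: (fun s => xd s ord0 i) + r \*: ((fun s => x s ord0 i) - cst (xs ord0 i)))) => //.
  by apply: is_derive_eq; rewrite subr0.
set dW := fun i => c * 'D_1 xd t ord0 i + r * xd t ord0 i.
have hS : is_derive t 1 (fun s => \sum_(i < d) Wf i s ^+ 2)
    (\sum_(i < d) (Wf i t * dW i + Wf i t * dW i)).
  apply: (@is_derive_ext _ _ (fun s => \sum_(i < d) (Wf i * Wf i) s)).
    by move=> s; apply: eq_bigr => i _; rewrite expr2.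
  by apply: is_derive_bigsum.
have hF := @f_is_derive _ _ f gradf x t fC1 dx; rewrite Dx in hF.
have hV : is_derive t 1 Vf (dotv (gradf (x t)) (xd t) + m / 2 * \sum_(i < d) (Wf i t * dW i + Wf i t * dW i)).
  apply: (@is_derive_ext _ _ ((fun s => f (x s)) - cst (f xs) + cst (m / 2) * (fun s => \sum_(i < d) Wf i s ^+ 2))) => //.
  by apply: is_derive_eq; rewrite subr0 scaler0 addr0.
have hL : is_derive t 1 (fun s => lam * s) lam.
  apply: (@is_derive_ext _ _ (lam \*: id)) => //.
  by apply: is_derive_eq; rewrite /GRing.scale /= mulr1.
have hEx : is_derive t 1 (expR \o (fun s => lam * s)) (expR (lam * t) * lam).
  exact: is_derive1_comp.
have hE : is_derive t 1 Ef (expR (lam * t) * (dotv (gradf (x t)) (xd t) + m / 2 * \sum_(i < d) (Wf i t * dW i + Wf i t * dW i)) + Vf t * (expR (lam * t) * lam)).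
  apply: (@is_derive_ext _ _ ((expR \o (fun s => lam * s)) * Vf)) => //.
  by apply: is_derive_eq.
split; first exact: ex_derive.
rewrite derive_val.
have s0p : 0 < s0 by rewrite /s0 sqrtr_gt0.
have ms : m = s0 ^+ 2 by rewrite /s0 sqr_sqrtr // ltW.
have [r0 _] := Xi_bounds _ _ b0 Hr.
have lam0 : 0 < lam by rewrite /lam mulr_gt0.
set g := gradf (x t).
set A := 'D_1 xd t.
have hA i : A ord0 i = - (b * s0 * xd t ord0 i) - g ord0 i.
  have := congr1 (fun M : 'rV[R]_d => M ord0 i) ode.
  rewrite !mxE /= => H; apply/eqP; rewrite -subr_eq0; apply/eqP; rewrite -H /g /s0; ring.
set Gs := \sum_(i < d) g ord0 i * (x t ord0 i - xs ord0 i).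
set Es := \sum_(i < d) (x t ord0 i - xs ord0 i) ^+ 2.
have conv : f (x t) - f xs <= Gs - m / 2 * Es.
  have := fsc (x t) xs.
  have -> : dotv (gradf (x t)) (xs - x t) = - Gs.
    rewrite /dotv /Gs -sumrN; apply: eq_bigr => i _; rewrite !mxE; ring.
  have -> : sqnorm (xs - x t) = Es.
    rewrite /sqnorm /dotv /Es; apply: eq_bigr => i _; rewrite !mxE; ring.
  lra.
set T := fun i : 'I_d => let e := x t ord0 i - xs ord0 i in let Y := xd t ord0 i in
  s0 * r * (g ord0 i * e - s0 ^+ 2 / 2 * e ^+ 2 + s0 ^+ 2 / 2 * (s0^-1 * Y + r * e) ^+ 2)
  + g ord0 i * Y + s0 ^+ 2 * (s0^-1 * Y + r * e) * (s0^-1 * (- (b * s0 * Y) - g ord0 i) + r * Y).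
have Tle : \sum_(i < d) T i <= 0.
  by apply: sumr_le0 => i _; rewrite /T /=; apply: term_le.
have key : lam * (Gs - m / 2 * Es + m / 2 * \sum_(i < d) Wf i t ^+ 2) +
   (dotv g (xd t) + m / 2 * \sum_(i < d) (Wf i t * dW i + Wf i t * dW i)) = \sum_(i < d) T i.
  rewrite /Gs /Es /dotv.
  rewrite mulrDr mulrBr !mulr_sumr -sumrN -!big_split /=.
  apply: eq_bigr => i _; rewrite /T /Wf /dW hA ms /c /lam /=.
  by apply: key_alg; rewrite gt_eqF.
have -> : expR (lam * t) * (dotv g (xd t) + m / 2 * \sum_(i < d) (Wf i t * dW i + Wf i t * dW i))
   + Vf t * (expR (lam * t) * lam) =
   expR (lam * t) * (lam * Vf t + (dotv g (xd t) + m / 2 * \sum_(i < d) (Wf i t * dW i + Wf i t * dW i))) by ring.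
rewrite mulr_ge0_le0 // ?expR_ge0 //.
have : lam * Vf t <= lam * (Gs - m / 2 * Es + m / 2 * \sum_(i < d) Wf i t ^+ 2).
  rewrite ler_pM2l // /Vf; lra.
lra.
Qed.
Lemma Ef_cont : solves_ode m b gradf x xd -> {within `[0, +oo[, continuous Ef}.
Proof.
move=> [cx [cxd _]].
have cexp : continuous (fun s : R => expR (lam * s)).
  move=> v; apply: continuous_comp; last exact: continuous_expR.
  by apply: continuousM; [exact: cvg_cst | exact: cvg_id].
have cexpA : {within `[0, +oo[, continuous (fun s : R => expR (lam * s))} := continuous_subspaceT cexp.
have cF : continuous f by move=> v; apply: differentiable_continuous; case: fC1.
move=> u.
pose A := `[0, +oo[ : interval R.
have cst_ (a : R) : {for u, continuous (from_subspace `[0, +oo[ (fun _ : R => a))}.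
  exact: cvg_cst.
have cX i : {for u, continuous (from_subspace `[0, +oo[ (fun s => x s ord0 i))}.
  exact: (continuous_comp (cx u) (@coord_continuous R 1 d ord0 i (x u))).
have cY i : {for u, continuous (from_subspace `[0, +oo[ (fun s => xd s ord0 i))}.
  exact: (continuous_comp (cxd u) (@coord_continuous R 1 d ord0 i (xd u))).
have cfx : {for u, continuous (from_subspace `[0, +oo[ (fun s => f (x s)))}.
  exact: (continuous_comp (cx u) (cF (x u))).
have cW i : {for u, continuous (from_subspace `[0, +oo[ (Wf i))}.
  exact: (continuousD (continuousM (cst_ c) (cY i)) (continuousM (cst_ r) (continuousB (cX i) (cst_ (xs ord0 i))))).
have cS : {for u, continuous (from_subspace `[0, +oo[ (fun s => \sum_(i < d) Wf i s ^+ 2))}.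
  exact: (@cont_bigsum R _ _ (index_enum 'I_d) (fun i => from_subspace `[0, +oo[ (fun s => Wf i s * Wf i s)) u (fun i => continuousM (cW i) (cW i))).
exact: (continuousM (cexpA u) (continuousD (continuousB cfx (cst_ (f xs))) (continuousM (cst_ (m / 2)) cS))).
Qed.
Lemma EfE t : Ef t = expR (Num.sqrt m * r * t) *
  (f (x t) - f xs + m / 2 * sqnorm ((Num.sqrt m)^-1 *: xd t + r *: (x t - xs))).
Proof.
rewrite /Ef /Vf /sqnorm /dotv /lam /s0; congr (_ * (_ + _ * _)).
by apply: eq_bigr => i _; rewrite /Wf !mxE expr2 /c /s0.
Qed.

Lemma Ef_mono : solves_ode m b gradf x xd -> forall s t, 0 <= s -> s <= t -> Ef t <= Ef s.
Proof.
move=> hode; have [_ [_ hd]] := hode.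
apply: ler0_derive1_nincry.
- move=> u; rewrite in_itv /= andbT => u0.
  by have [h1 [h2 [h3 h4]]] := hd u u0; have [] := (@Ef_derive u h1 h2 h3 h4).
- move=> u; rewrite in_itv /= andbT => u0.
  by have [h1 [h2 [h3 h4]]] := hd u u0; have [] := (@Ef_derive u h1 h2 h3 h4); rewrite derive1E.
- exact: Ef_cont.
Qed.

Lemma Vf_lb t : f (x t) - f xs <= Vf t.
Proof.
rewrite /Vf lerDl mulr_ge0 //; first by rewrite divr_ge0 // ltW.
by apply: sumr_ge0 => i _; apply: sqr_ge0.
Qed.

Lemma final_bound : solves_ode m b gradf x xd -> forall t, 0 <= t ->
  f (x t) - f xs <= (f (x 0) - f xs +
        m / 2 * sqnorm ((Num.sqrt m)^-1 *: xd 0 + r *: (x 0 - xs))) * expR (- (Num.sqrt m * r) * t).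
Proof.
move=> hode t t0.
have := @Ef_mono hode 0 t (lexx 0) t0.
rewrite !EfE mulr0 expR0 mul1r -EfE => h.
have : Vf t <= (f (x 0) - f xs + m / 2 * sqnorm ((Num.sqrt m)^-1 *: xd 0 + r *: (x 0 - xs))) * expR (- (Num.sqrt m * r) * t).
  rewrite mulNr expRN.
  rewrite ler_pdivlMr ?expR_gt0 // mulrC.
  by move: h; rewrite /Ef /lam /s0.
have := Vf_lb t; lra.
Qed.
End Main.

Theorem theorem5 (R : realType) (d : nat) (m b : R)
    (f : 'rV[R]_d -> R) (gradf : 'rV[R]_d -> 'rV[R]_d) (xs : 'rV[R]_d)
    (x xd : R -> 'rV[R]_d) :
  0 < m -> C1_with_gradient f gradf -> strongly_convex m f gradf ->
  (forall y, f xs <= f y) ->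
  0 < b -> solves_ode m b gradf x xd ->
  (exists! r : R, Xibar r b = 0) /\
  forall r : R, Xibar r b = 0 ->
    let lam := Num.sqrt m * r in
    let v := fun t => (Num.sqrt m)^-1 *: xd t in
    let E := fun t => expR (lam * t) *
        (f (x t) - f xs + m / 2 * sqnorm (v t + r *: (x t - xs))) in
    let Cb := f (x 0) - f xs +
        m / 2 * sqnorm ((Num.sqrt m)^-1 *: xd 0 + r *: (x 0 - xs)) in
    [/\ 0 < r /\ r <= 1, (r = 1 <-> b = 2),
        (forall s t : R, 0 <= s -> s <= t -> E t <= E s) &
        (forall t : R, 0 <= t -> f (x t) - f xs <= Cb * expR (- lam * t))].
Proof.
move=> m0 fC1 fsc fmin b0 hode; split.
  have [r Hr] := Xi_exists _ b0.
  exists r; split => // r' Hr'; exact: Xi_unique _ _ _ b0 Hr Hr'.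
move=> r Hr lam v E Cb; split.
- exact: Xi_bounds _ _ b0 Hr.
- split => [r1|b2].
    move: Hr; rewrite r1 /Xibar => H.
    have : (b - 2) ^+ 2 = 0 by rewrite -H; ring.
    by move/eqP; rewrite sqrf_eq0 subr_eq0 => /eqP.
  apply: (Xi_unique _ _ _ b0 Hr); rewrite b2 /Xibar; ring.
- move=> s t s0 st; rewrite /E /v /lam -!(EfE R d m r f xs x xd).
  exact: (@Ef_mono R d m b r f gradf xs x xd m0 fC1 fsc b0 Hr hode s t s0 st).
- move=> t t0; rewrite /Cb /lam.
  exact: (@final_bound R d m b r f gradf xs x xd m0 fC1 fsc b0 Hr hode t t0).
Qed.
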